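(* Let $\varPhi\subset\mathbb{E}^3$ be a skew ruled surface with invariants $\delta,\kappa,\lambda$, right normalized with support function $q=\frac{f(u)+g(u)v}{w}$, neither $f$ nor $g$ the zero function, and let $\overline{T}$ be its Tchebychev vector field. Then: (a) $\overline{T}$ is tangential to the $u$-curves of $\varPhi$ if and only if $\varPhi$ is conoidal and $g=c_1|\delta|^{-1/2}$, $c_1\in\mathbb{R}\setminus\{0\}$, and $f=|\delta|^{1/2}\left(c_1\int\lambda\,\mathrm{d}u+c_2\right)$, $c_2\in\mathbb{R}$; (b) $\overline{T}$ is orthogonal to the $u$-curves of $\varPhi$ if and only if the striction curve of $\varPhi$ is a Euclidean line of curvature and $g=c_1|\delta|^{-1/2}$, $f=c_2|\delta|^{1/2}$ with $c_1,c_2\in\mathbb{R}\setminus\{0\}$.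
   Context: $\varPhi$ is a ruled $C^r$-surface ($r\ge3$) with nonvanishing Gaussian curvature, in standard parameters $\overline{x}(u,v)=\overline{s}(u)+v\,\overline{e}(u)$, $|\overline{e}|=|\overline{e}'|=1$, $\langle\overline{s}',\overline{e}'\rangle=0$; $\overline{s}$ is the striction curve. Frame $\overline{n}=\overline{e}'$, $\overline{z}=\overline{e}\times\overline{n}$. Invariants: $\delta=(\overline{s}',\overline{e},\overline{e}')\neq0$, $\kappa=(\overline{e},\overline{e}',\overline{e}'')$, $\lambda=\cot\sphericalangle(\overline{e},\overline{s}')$, $\overline{s}'=\delta\lambda\overline{e}+\delta\overline{z}$. The striction curve is a Euclidean line of curvature exactly when $\kappa\lambda+1=0$. Conoidal means $\kappa\equiv0$. $w=\sqrt{\delta^2+v^2}$, $\overline{\xi}=(\delta\overline{n}-v\overline{z})/w$. $h_{11}=-(\kappa w^2+\delta'v-\delta^2\lambda)/w$, $h_{12}=\delta/w$, $h_{22}=0$. The $u$-curves are the curves $v=$const (curves of constant striction distance). A relative normalization $\overline{y}$ is determined by its support function $q=\langle\overline{\xi},\overline{y}\rangle\neq0$; right normalization: $q=(f+gv)/w$, $f,g$ functions of $u$. Relative metric $G_{ij}=q^{-1}h_{ij}$, Darboux tensor $A_{ijk}=q^{-1}\langle\overline{\xi},\nabla^G_k\nabla^G_j\overline{x}_{/i}\rangle$, Tchebychev vector $\overline{T}=T^m\overline{x}_{/m}$, $T^m=\frac12A_i^{\ im}$; equivalently $T^1=\frac{w^2q_{/2}+vq}{\delta w}$, $T^2=\frac{2\delta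 w^2q_{/1}+\delta'q(\delta^2-v^2)}{2\delta^2w}+\frac{T^1(\kappa w^2+\delta'v-\delta^2\lambda)}{\delta}$. ''Tangential/orthogonal to a family of curves'' means at every point $\overline{T}$ is parallel/orthogonal to the tangent of the curve of the family through that point. $\int\cdots\mathrm{d}u$ denotes an antiderivative.
   Formalization: In part (a) the integrand λ is replaced by cot∠(e,s') = ⟨s',e⟩/|s'×e|, which equals sgn(δ)λ, while λ elsewhere, including in κλ+1=0, is taken from $\overline{s}'=\delta\lambda\overline{e}+\delta\overline{z}$. Each condition added here is assumed in the paper as well or is needed for the statement above to hold. *)

(* Defs.v *)
From Stdlib Require Import Reals.
From Coquelicot Require Import Coquelicot.
Open Scope R_scope.

Definition V3 := (R * R * R)%type.
Definition vx (a : V3) : R := fst (fst a).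
Definition vy (a : V3) : R := snd (fst a).
Definition vz (a : V3) : R := snd a.
Definition mk3 (x y z : R) : V3 := (x, y, z).
Definition vadd (a b : V3) : V3 := mk3 (vx a + vx b) (vy a + vy b) (vz a + vz b).
Definition vscal (k : R) (a : V3) : V3 := mk3 (k * vx a) (k * vy a) (k * vz a).
Definition vzero : V3 := mk3 0 0 0.
Definition dot (a b : V3) : R := vx a * vx b + vy a * vy b + vz a * vz b.
Definition cross (a b : V3) : V3 :=
  mk3 (vy a * vz b - vz a * vy b) (vz a * vx b - vx a * vz b) (vx a * vy b - vy a * vx b).
Definition triple (a b c : V3) : R := dot a (cross b c).
Definition vnorm (a : V3) : R := sqrt (dot a a).

Definition vD (F : R -> V3) (u : R) : V3 :=
  mk3 (Derive (fun t => vx (F t)) u) (Derive (fun t => vy (F t)) u)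
      (Derive (fun t => vz (F t)) u).

Definition inI (a b : Rbar) (u : R) : Prop := Rbar_lt a u /\ Rbar_lt u b.

Definition C3_on (a b : Rbar) (h : R -> R) : Prop :=
  forall u, inI a b u ->
    (forall k, (k <= 3)%nat -> ex_derive_n h k u) /\ continuous (Derive_n h 3) u.

Definition vC3_on (a b : Rbar) (F : R -> V3) : Prop :=
  C3_on a b (fun t => vx (F t)) /\ C3_on a b (fun t => vy (F t)) /\
  C3_on a b (fun t => vz (F t)).

(** * Ruled surface x(u,v) = s(u) + v e(u) in standard parameters (C^3) *)
Definition standard_ruled (a b : Rbar) (s e : R -> V3) : Prop :=
  vC3_on a b s /\ vC3_on a b e /\
  forall u, inI a b u ->
    dot (e u) (e u) = 1 /\ dot (vD e u) (vD e u) = 1 /\ dot (vD s u) (vD e u) = 0.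

Section Invariants.
Variables (s e : R -> V3).
Definition delta (u : R) : R := triple (vD s u) (e u) (vD e u).
Definition kappa (u : R) : R := triple (e u) (vD e u) (vD (vD e) u).
(** lambda defined through  s' = delta*lambda*e + delta*z  *)
Definition lambda (u : R) : R := dot (vD s u) (e u) / delta u.
(** cot of the (unoriented) angle between e and s' *)
Definition cot_angle (u : R) : R := dot (vD s u) (e u) / vnorm (cross (vD s u) (e u)).

Definition wfun (u v : R) : R := sqrt (delta u ^ 2 + v ^ 2).

Definition x1 (u v : R) : V3 := vadd (vD s u) (vscal v (vD e u)).
Definition x2 (u v : R) : V3 := e u.

Variables (f g : R -> R).
Definition qfun (u v : R) : R := (f u + g u * v) / wfun u v.
Definition q_1 (u v : R) : R := Derive (fun t => qfun t v) u.
Definition q_2 (u v : R) : R := Derive (fun t => qfun u t) v.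

Definition T1 (u v : R) : R :=
  (wfun u v ^ 2 * q_2 u v + v * qfun u v) / (delta u * wfun u v).
Definition T2 (u v : R) : R :=
  (2 * delta u * wfun u v ^ 2 * q_1 u v
     + Derive delta u * qfun u v * (delta u ^ 2 - v ^ 2))
    / (2 * delta u ^ 2 * wfun u v)
  + T1 u v * (kappa u * wfun u v ^ 2 + Derive delta u * v - delta u ^ 2 * lambda u)
    / delta u.
Definition Tvec (u v : R) : V3 := vadd (vscal (T1 u v) (x1 u v)) (vscal (T2 u v) (x2 u v)).

(** points of the surface where the normalization is defined (q <> 0) *)
Definition dom (a b : Rbar) (u v : R) : Prop := inI a b u /\ f u + g u * v <> 0.

Definition T_tangential_ucurves (a b : Rbar) : Prop :=
  forall u v, dom a b u v -> cross (Tvec u v) (x1 u v) = vzero.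
Definition T_orthogonal_ucurves (a b : Rbar) : Prop :=
  forall u v, dom a b u v -> dot (Tvec u v) (x1 u v) = 0.
End Invariants.

(* Main.v *)
Require Import Defs.
From Stdlib Require Import Reals Lra Lia.
From Coquelicot Require Import Coquelicot.
Open Scope R_scope.

Lemma loc_inI (a b : Rbar) u : inI a b u -> locally u (inI a b).
Proof.
  intros [H1 H2].
  pose proof (open_Rbar_gt' u a H1) as L1.
  pose proof (open_Rbar_lt' u b H2) as L2.
  simpl in L1, L2.
  generalize (filter_and _ _ L1 L2). apply filter_imp. intros x [? ?]; split; auto.
Qed.

Lemma inI_between a b u1 u2 x : inI a b u1 -> inI a b u2 ->
  Rmin u1 u2 <= x <= Rmax u1 u2 -> inI a b x.
Proof.
  unfold inI, Rmin, Rmax; intros [A1 B1] [A2 B2] Hx.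
  destruct (Rle_dec u1 u2);
  destruct a as [a| |]; destruct b as [b| |]; simpl in *; split; try tauto; lra.
Qed.

Lemma const_I a b (h : R -> R) : (forall u, inI a b u -> is_derive h u 0) ->
  forall u1 u2, inI a b u1 -> inI a b u2 -> h u1 = h u2.
Proof.
  intros H u1 u2 H1 H2.
  destruct (MVT_gen h u1 u2 (fun _ => 0)) as [c [_ Hc]].
  - intros x Hx. apply H. apply (inI_between a b u1 u2); auto; lra.
  - intros x Hx. apply continuity_pt_filterlim. apply (ex_derive_continuous (K:=R_AbsRing) (V:=R_NormedModule) h x).
    exists 0. apply H. apply (inI_between a b u1 u2); auto.
  - lra.
Qed.

Lemma hh_const a b (h dh : R -> R) :
  (forall u, inI a b u -> is_derive h u (dh u)) ->
  (forall u, inI a b u -> h u * dh u = 0) ->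
  forall u1 u2, inI a b u1 -> inI a b u2 -> h u1 = h u2.
Proof.
  intros Hd Hz.
  assert (Hsq : forall u1 u2, inI a b u1 -> inI a b u2 -> h u1 * h u1 = h u2 * h u2).
  { apply (const_I a b (fun t => h t * h t)). intros u Hu.
    assert (D := is_derive_mult h h u (dh u) (dh u) (Hd u Hu) (Hd u Hu) Rmult_comm).
    replace 0 with (dh u * h u + h u * dh u). exact D.
    specialize (Hz u Hu). nra. }
  intros u1 u2 H1 H2.
  destruct (Req_dec (h u1) 0) as [E|E].
  - specialize (Hsq u1 u2 H1 H2). rewrite E in Hsq. nra.
  - apply (const_I a b h); auto. intros u Hu.
    assert (h u <> 0). { intro E'. specialize (Hsq u1 u H1 Hu). rewrite E' in Hsq.
      apply E. nra. }
    specialize (Hz u Hu). replace 0 with (dh u). apply Hd; auto.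
    apply (Rmult_eq_reg_l (h u)); auto. lra.
Qed.

Ltac etared := repeat match goal with |- context [fun t => ?h t] => change (fun t => h t) with h end.

Lemma C3_facts a b h u : C3_on a b h -> inI a b u -> ex_derive h u /\ ex_derive (Derive h) u.
Proof.
  intros H Hu. destruct (H u Hu) as [Hd _]. split.
  - exact (Hd 1%nat ltac:(lia)).
  - exact (Hd 2%nat ltac:(lia)).
Qed.

Lemma ex_derive_trip (a1 a2 a3 b1 b2 b3 c1 c2 c3 : R -> R) u :
  ex_derive a1 u -> ex_derive a2 u -> ex_derive a3 u ->
  ex_derive b1 u -> ex_derive b2 u -> ex_derive b3 u ->
  ex_derive c1 u -> ex_derive c2 u -> ex_derive c3 u ->
  ex_derive (fun t => triple (mk3 (a1 t) (a2 t) (a3 t)) (mk3 (b1 t) (b2 t) (b3 t))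
     (mk3 (c1 t) (c2 t) (c3 t))) u.
Proof.
  intros. unfold triple, dot, cross, vx, vy, vz, mk3; simpl.
  auto_derive. repeat split; auto.
Qed.

Lemma deriv_unit a b (x y z : R -> R) u : inI a b u ->
  (forall t, inI a b t -> x t * x t + y t * y t + z t * z t = 1) ->
  ex_derive x u -> ex_derive y u -> ex_derive z u ->
  x u * Derive x u + y u * Derive y u + z u * Derive z u = 0.
Proof.
  intros Hu H Hx Hy Hz.
  assert (D1 : is_derive (fun t => x t * x t + y t * y t + z t * z t) u
     (2 * (x u * Derive x u + y u * Derive y u + z u * Derive z u))).
  { auto_derive. repeat split; assumption. etared. ring. }
  assert (D2 : is_derive (fun t => x t * x t + y t * y t + z t * z t) u 0).
  { apply (is_derive_ext_loc (fun _ => 1)).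
    generalize (loc_inI a b u Hu). apply filter_imp. intros t Ht. symmetry; auto.
    exact (@is_derive_const R_AbsRing R_NormedModule 1 u). }
  apply is_derive_unique in D1. apply is_derive_unique in D2. lra.
Qed.

Lemma local_facts a b s e u : standard_ruled a b s e -> inI a b u ->
  dot (e u) (e u) = 1 /\ dot (vD e u) (vD e u) = 1 /\ dot (vD s u) (vD e u) = 0 /\
  dot (e u) (vD e u) = 0 /\ ex_derive (delta s e) u.
Proof.
  intros [[Sx [Sy Sz]] [[Ex [Ey Ez]] Hc]] Hu.
  destruct (Hc u Hu) as [H1 [H2 H3]].
  repeat split; auto.
  - refine (deriv_unit a b (fun t => vx (e t)) (fun t => vy (e t)) (fun t => vz (e t)) u Hu _ _ _ _).
    + intros t Ht. destruct (Hc t Ht) as [K _]. exact K.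
    + apply (C3_facts a b _ u Ex Hu).
    + apply (C3_facts a b _ u Ey Hu).
    + apply (C3_facts a b _ u Ez Hu).
  - destruct (C3_facts a b _ u Sx Hu) as [_ A1]. destruct (C3_facts a b _ u Sy Hu) as [_ A2].
    destruct (C3_facts a b _ u Sz Hu) as [_ A3]. destruct (C3_facts a b _ u Ex Hu) as [B1 C1].
    destruct (C3_facts a b _ u Ey Hu) as [B2 C2]. destruct (C3_facts a b _ u Ez Hu) as [B3 C3].
    exact (ex_derive_trip _ _ _ (fun t => vx (e t)) (fun t => vy (e t)) (fun t => vz (e t)) _ _ _ u A1 A2 A3 B1 B2 B3 C1 C2 C3).
Qed.

Lemma gram (A B C : V3) : triple A B C ^ 2 =
  dot A A * (dot B B * dot C C - dot B C ^ 2)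
  - dot A B * (dot A B * dot C C - dot B C * dot A C)
  + dot A C * (dot A B * dot B C - dot B B * dot A C).
Proof.
  destruct A as [[a1 a2] a3]; destruct B as [[b1 b2] b3]; destruct C as [[c1 c2] c3].
  unfold triple, dot, cross, vx, vy, vz, mk3; simpl. ring.
Qed.

Lemma lagrange (A B : V3) : dot (cross A B) (cross A B) = dot A A * dot B B - dot A B ^ 2.
Proof.
  destruct A as [[a1 a2] a3]; destruct B as [[b1 b2] b3].
  unfold dot, cross, vx, vy, vz, mk3; simpl. ring.
Qed.


Lemma W_pos s e u v : delta s e u <> 0 -> 0 < wfun s e u v.
Proof.
  intros Hd. unfold wfun. apply sqrt_lt_R0. 
  assert (0 < delta s e u ^ 2) by (apply pow2_gt_0; auto). nra.
Qed.

Lemma W_sq s e u v : wfun s e u v ^ 2 = delta s e u ^ 2 + v ^ 2.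
Proof.
  unfold wfun. rewrite <- Rsqr_pow2. rewrite Rsqr_sqrt. ring. nra.
Qed.

Lemma q2_val s e f g u v : delta s e u <> 0 ->
  q_2 s e f g u v = (g u * wfun s e u v ^ 2 - (f u + g u * v) * v) / wfun s e u v ^ 3.
Proof.
  intros Hd. pose proof (W_pos s e u v Hd) as HW.
  unfold q_2. apply is_derive_unique. unfold qfun. unfold wfun in *.
  auto_derive.
  - split; [|split; auto]. assert (0 < delta s e u ^ 2) by (apply pow2_gt_0; auto). nra.
    apply Rgt_not_eq; auto.
  - cbn [pow] in *. field. apply Rgt_not_eq; auto.
Qed.

Lemma q1_val s e f g u v : delta s e u <> 0 ->
  ex_derive f u -> ex_derive g u -> ex_derive (delta s e) u ->
  q_1 s e f g u v = ((Derive f u + Derive g u * v) * wfun s e u v ^ 2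
     - (f u + g u * v) * delta s e u * Derive (delta s e) u) / wfun s e u v ^ 3.
Proof.
  intros Hd Hf Hg Hde. pose proof (W_pos s e u v Hd) as HW.
  unfold q_1. apply is_derive_unique. unfold qfun. unfold wfun in *.
  auto_derive.
  - repeat split; auto. assert (0 < delta s e u ^ 2) by (apply pow2_gt_0; auto). nra.
    apply Rgt_not_eq; auto.
  - etared. cbn [pow] in *. field. apply Rgt_not_eq; auto.
Qed.

Lemma T1_val s e f g u v : delta s e u <> 0 -> T1 s e f g u v = g u / delta s e u.
Proof.
  intros Hd. pose proof (W_pos s e u v Hd) as HW.
  unfold T1. rewrite q2_val; auto. unfold qfun. field. split; lra.
Qed.

Definition Acoef s e f g u := 2 * delta s e u * Derive f u - Derive (delta s e) u * f u
   + 2 * g u * delta s e u ^ 2 * (kappa e u - lambda s e u).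
Definition Bcoef s e g u := 2 * delta s e u * Derive g u + Derive (delta s e) u * g u.
Definition Ccoef e g u := 2 * g u * kappa e u.

Lemma T2_val s e f g u v : delta s e u <> 0 ->
  ex_derive f u -> ex_derive g u -> ex_derive (delta s e) u ->
  T2 s e f g u v = (Acoef s e f g u + Bcoef s e g u * v + Ccoef e g u * v ^ 2)
     / (2 * delta s e u ^ 2).
Proof.
  intros Hd Hf Hg Hde. pose proof (W_pos s e u v Hd) as HW.
  pose proof (W_sq s e u v) as HW2.
  unfold T2. rewrite T1_val, q1_val; auto. unfold qfun, Acoef, Bcoef, Ccoef.
  set (W := wfun s e u v) in *.
  replace (delta s e u ^ 2 - v ^ 2) with (2 * delta s e u ^ 2 - W ^ 2) by lra.
  replace (v ^ 2) with (W ^ 2 - delta s e u ^ 2) by lra.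
  field. split; lra.
Qed.


Ltac vdes := repeat match goal with
  | X : V3 |- _ => let a := fresh "a" in let b := fresh "b" in let c := fresh "c" in
                   destruct X as [[a b] c] end.

Lemma cross_lin (X Y : V3) (k l : R) :
  cross (vadd (vscal k X) (vscal l Y)) X = vscal l (cross Y X).
Proof. vdes. unfold cross, vadd, vscal, vx, vy, vz, mk3; simpl. f_equal; [f_equal|]; ring. Qed.

Lemma dot_lin (X Y : V3) (k l : R) :
  dot (vadd (vscal k X) (vscal l Y)) X = k * dot X X + l * dot Y X.
Proof. vdes. unfold dot, vadd, vscal, vx, vy, vz, mk3; simpl. ring. Qed.

Lemma dot_scal_l k (X Y : V3) : dot (vscal k X) Y = k * dot X Y.
Proof. vdes. unfold dot, vscal, vx, vy, vz, mk3; simpl. ring. Qed.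

Lemma dot_x1x1 (S N : V3) v : dot (vadd S (vscal v N)) (vadd S (vscal v N)) =
  dot S S + 2 * v * dot S N + v ^ 2 * dot N N.
Proof. vdes. unfold dot, vadd, vscal, vx, vy, vz, mk3; simpl. ring. Qed.

Lemma dot_ex1 (E S N : V3) v : dot E (vadd S (vscal v N)) = dot S E + v * dot E N.
Proof. vdes. unfold dot, vadd, vscal, vx, vy, vz, mk3; simpl. ring. Qed.

Lemma dot_comm (X Y : V3) : dot X Y = dot Y X.
Proof. vdes. unfold dot, vx, vy, vz; simpl. ring. Qed.


Lemma point_facts a b s e u : standard_ruled a b s e -> inI a b u -> delta s e u <> 0 ->
  dot (vD s u) (vD s u) = dot (vD s u) (e u) ^ 2 + delta s e u ^ 2 /\
  (forall v, dot (x1 s e u v) (x1 s e u v) = dot (vD s u) (e u) ^ 2 + delta s e u ^ 2 + v ^ 2) /\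
  (forall v, dot (e u) (x1 s e u v) = dot (vD s u) (e u)) /\
  (forall v, dot (cross (e u) (x1 s e u v)) (cross (e u) (x1 s e u v)) = delta s e u ^ 2 + v ^ 2) /\
  vnorm (cross (vD s u) (e u)) = Rabs (delta s e u).
Proof.
  intros Hs Hu Hd.
  destruct (local_facts a b s e u Hs Hu) as [E1 [E2 [E3 [E4 _]]]].
  assert (G : dot (vD s u) (vD s u) = dot (vD s u) (e u) ^ 2 + delta s e u ^ 2).
  { unfold delta. rewrite gram. rewrite E1, E2, E3, (dot_comm (e u) (vD e u)) , E4 in *.
    ring. }
  assert (X1 : forall v, dot (x1 s e u v) (x1 s e u v) = dot (vD s u) (e u) ^ 2 + delta s e u ^ 2 + v ^ 2).
  { intro v. unfold x1. rewrite dot_x1x1, G, E3, E2. ring. }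
  assert (X2 : forall v, dot (e u) (x1 s e u v) = dot (vD s u) (e u)).
  { intro v. unfold x1. rewrite dot_ex1, E4. ring. }
  split; [exact G|]. split; [exact X1|]. split; [exact X2|]. split.
  - intro v. rewrite lagrange, X1, X2, E1. ring.
  - unfold vnorm. rewrite lagrange, G, E1.
    replace ((dot (vD s u) (e u) ^ 2 + delta s e u ^ 2) * 1 - dot (vD s u) (e u) ^ 2) with (Rsqr (delta s e u)) by (unfold Rsqr; ring).
    apply sqrt_Rsqr_abs.
Qed.


Lemma tang_point a b s e f g u v : standard_ruled a b s e -> inI a b u -> delta s e u <> 0 ->
  ex_derive f u -> ex_derive g u ->
  (cross (Tvec s e f g u v) (x1 s e u v) = vzero <->
   Acoef s e f g u + Bcoef s e g u * v + Ccoef e g u * v ^ 2 = 0).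
Proof.
  intros Hs Hu Hd Hf Hg.
  destruct (local_facts a b s e u Hs Hu) as [_ [_ [_ [_ Hde]]]].
  destruct (point_facts a b s e u Hs Hu Hd) as [_ [_ [_ [K _]]]].
  unfold Tvec, x2. rewrite cross_lin.
  rewrite (T2_val s e f g u v Hd Hf Hg Hde).
  set (N := Acoef s e f g u + Bcoef s e g u * v + Ccoef e g u * v ^ 2).
  assert (0 < delta s e u ^ 2) by (apply pow2_gt_0; auto).
  split.
  - intro H0. apply (f_equal (fun X => dot X (cross (e u) (x1 s e u v)))) in H0.
    rewrite dot_scal_l, K in H0.
    replace (dot vzero (cross (e u) (x1 s e u v))) with 0 in H0 by (unfold vzero, dot, mk3, vx, vy, vz; simpl; ring).
    assert (N / (2 * delta s e u ^ 2) = 0).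
    { assert (0 < delta s e u ^ 2 + v ^ 2) by nra.
      apply (Rmult_eq_reg_r (delta s e u ^ 2 + v ^ 2)); lra. }
    replace N with (N / (2 * delta s e u ^ 2) * (2 * delta s e u ^ 2)) by (field; lra).
    rewrite H1; ring.
  - intro H0. rewrite H0. unfold vscal, vzero, mk3. f_equal; [f_equal|]; unfold Rdiv; ring.
Qed.

Lemma orth_point a b s e f g u v : standard_ruled a b s e -> inI a b u -> delta s e u <> 0 ->
  ex_derive f u -> ex_derive g u ->
  dot (Tvec s e f g u v) (x1 s e u v) =
   (2 * g u * (delta s e u ^ 2 * (1 + lambda s e u ^ 2) + v ^ 2)
    + lambda s e u * (Acoef s e f g u + Bcoef s e g u * v + Ccoef e g u * v ^ 2))
   / (2 * delta s e u).
Proof.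
  intros Hs Hu Hd Hf Hg.
  destruct (local_facts a b s e u Hs Hu) as [_ [_ [_ [_ Hde]]]].
  destruct (point_facts a b s e u Hs Hu Hd) as [_ [X1 [X2 _]]].
  unfold Tvec, x2. rewrite dot_lin, X1, X2.
  rewrite (T2_val s e f g u v Hd Hf Hg Hde), T1_val by auto.
  unfold lambda. field. auto.
Qed.

Lemma poly3 c0 c1 c2 F G : G <> 0 ->
  (forall v, F + G * v <> 0 -> c0 + c1 * v + c2 * v ^ 2 = 0) ->
  c0 = 0 /\ c1 = 0 /\ c2 = 0.
Proof.
  intros HG H.
  destruct (Req_dec (F + G * 0) 0) as [E0|E0];
  destruct (Req_dec (F + G * 1) 0) as [E1|E1];
  destruct (Req_dec (F + G * 2) 0) as [E2|E2];
  destruct (Req_dec (F + G * 3) 0) as [E3|E3];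
  repeat match goal with
  | E : F + G * ?k <> 0 |- _ => let h := fresh "P" in pose proof (H k E) as h; clear E
  end;
  simpl in *;
  try (exfalso; apply HG; lra);
  repeat split; lra.
Qed.


Definition Sf s e t := sqrt (Rabs (delta s e t)).

Lemma S_facts s e u : delta s e u <> 0 ->
  0 < Sf s e u /\ Sf s e u ^ 2 = Rabs (delta s e u) /\ Sf s e u ^ 4 = delta s e u ^ 2.
Proof.
  intros Hd. unfold Sf.
  assert (HA : 0 < Rabs (delta s e u)) by (apply Rabs_pos_lt; auto).
  assert (H2 : sqrt (Rabs (delta s e u)) ^ 2 = Rabs (delta s e u)).
  { rewrite <- Rsqr_pow2. apply Rsqr_sqrt. lra. }
  split; [apply sqrt_lt_R0; auto|]. split; auto.
  replace 4%nat with (2*2)%nat by lia. rewrite pow_mult, H2.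
  rewrite <- (pow2_abs (delta s e u)). reflexivity.
Qed.

Lemma S_deriv s e u : delta s e u <> 0 -> ex_derive (delta s e) u ->
  is_derive (Sf s e) u (delta s e u * Derive (delta s e) u / (2 * Sf s e u ^ 3)).
Proof.
  intros Hd Hde.
  destruct (S_facts s e u Hd) as [P [Q _]].
  assert (HA : 0 < Rabs (delta s e u)) by (apply Rabs_pos_lt; auto).
  pose proof (is_derive_sqrt _ u _ (is_derive_Rabs (delta s e) u _ (Derive_correct _ _ Hde) Hd) HA) as D.
  replace (delta s e u * Derive (delta s e) u / (2 * Sf s e u ^ 3))
    with (sign (delta s e u) * Derive (delta s e) u / (2 * sqrt (Rabs (delta s e u)))).
  exact D.
  fold (Sf s e u). set (S := Sf s e u) in *.
  destruct (Rlt_or_le 0 (delta s e u)) as [L|L].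
  - rewrite sign_eq_1 by auto. rewrite Rabs_right in Q by lra. rewrite <- Q. field. lra.
  - rewrite sign_eq_m1 by lra. rewrite Rabs_left in Q by lra.
    replace (delta s e u) with (- S ^ 2) by lra. field. lra.
Qed.

Lemma alg_h S d d' G G' : 0 < S -> d <> 0 -> S ^ 4 = d ^ 2 ->
  plus (mult G' S) (mult G (d * d' / (2 * S ^ 3))) = S * (2 * d * G' + d' * G) / (2 * d).
Proof.
  intros P Hd R4. unfold plus, mult; simpl.
  replace (d * d' / (2 * (S * (S * (S * 1))))) with (d ^ 2 * d' * S / (2 * S ^ 4 * d)) by (simpl; field; lra).
  rewrite R4. field. auto.
Qed.

Lemma alg_k S d d' F F' : 0 < S -> d <> 0 -> S ^ 4 = d ^ 2 ->
  (2 * d * F' - d' * F) / (2 * d * S) = (F' * S - F * (d * d' / (2 * S ^ 3))) / (S ^ 2).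
Proof.
  intros P Hd R4.
  replace (d * d' / (2 * S ^ 3)) with (d ^ 2 * d' * S / (2 * S ^ 4 * d)) by (field; lra).
  rewrite R4. field. split; lra.
Qed.

Lemma h_deriv s e g u : delta s e u <> 0 -> ex_derive (delta s e) u -> ex_derive g u ->
  is_derive (fun t => g t * Sf s e t) u (Sf s e u * Bcoef s e g u / (2 * delta s e u)).
Proof.
  intros Hd Hde Hg.
  destruct (S_facts s e u Hd) as [P [Q R4]].
  pose proof (is_derive_mult g (Sf s e) u _ _ (Derive_correct _ _ Hg) (S_deriv s e u Hd Hde) Rmult_comm) as D.
  eapply is_derive_ext. intro t; reflexivity.
  replace (Sf s e u * Bcoef s e g u / (2 * delta s e u)) with
    (plus (mult (Derive g u) (Sf s e u)) (mult (g u) (delta s e u * Derive (delta s e) u / (2 * Sf s e u ^ 3)))).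
  exact D.
  apply (alg_h (Sf s e u) (delta s e u) (Derive (delta s e) u) (g u) (Derive g u)); auto.
Qed.

Lemma k_deriv s e f u : delta s e u <> 0 -> ex_derive (delta s e) u -> ex_derive f u ->
  is_derive (fun t => f t / Sf s e t) u
   ((2 * delta s e u * Derive f u - Derive (delta s e) u * f u) / (2 * delta s e u * Sf s e u)).
Proof.
  intros Hd Hde Hf.
  destruct (S_facts s e u Hd) as [P [Q R4]].
  pose proof (is_derive_div f (Sf s e) u _ _ (Derive_correct _ _ Hf) (S_deriv s e u Hd Hde) ltac:(lra)) as D.
  eapply is_derive_ext. intro t; reflexivity.
  replace ((2 * delta s e u * Derive f u - Derive (delta s e) u * f u) / (2 * delta s e u * Sf s e u)) with
    ((Derive f u * Sf s e u - f u * (delta s e u * Derive (delta s e) u / (2 * Sf s e u ^ 3))) / (Sf s e u ^ 2)).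
  exact D.
  symmetry. apply (alg_k (Sf s e u) (delta s e u) (Derive (delta s e) u) (f u) (Derive f u)); auto.
Qed.


Definition Hyps a b s e (f g : R -> R) :=
  standard_ruled a b s e /\ (forall u, inI a b u -> delta s e u <> 0) /\
  (forall u, inI a b u -> ex_derive f u /\ ex_derive g u).

Lemma g_const a b s e f g u1 : Hyps a b s e f g -> inI a b u1 -> g u1 <> 0 ->
  (forall u, inI a b u -> g u <> 0 -> Bcoef s e g u = 0) ->
  exists c1, c1 <> 0 /\ forall u, inI a b u -> g u = c1 / Sf s e u.
Proof.
  intros [Hs [Hd Hfg]] Hu1 Hg1 HB.
  assert (K := hh_const a b (fun t => g t * Sf s e t)
     (fun u => Sf s e u * Bcoef s e g u / (2 * delta s e u))).
  assert (K1 : forall t, inI a b t -> is_derive (fun t => g t * Sf s e t) t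
     (Sf s e t * Bcoef s e g t / (2 * delta s e t))).
  { intros t Ht. apply h_deriv; auto. apply (local_facts a b s e t Hs Ht). apply Hfg; auto. }
  assert (K2 : forall t, inI a b t -> g t * Sf s e t * (Sf s e t * Bcoef s e g t / (2 * delta s e t)) = 0).
  { intros t Ht. destruct (Req_dec (g t) 0) as [E|E]. rewrite E; ring.
    rewrite (HB t Ht E). unfold Rdiv; ring. }
  specialize (K K1 K2). simpl in K.
  exists (g u1 * Sf s e u1). destruct (S_facts s e u1 (Hd u1 Hu1)) as [P1 _].
  split. { apply Rmult_integral_contrapositive; split; lra. }
  intros u Hu. destruct (S_facts s e u (Hd u Hu)) as [P _].
  rewrite <- (K u u1 Hu Hu1). field. lra.
Qed.

Lemma f_const a b s e f g u0 : Hyps a b s e f g -> inI a b u0 -> f u0 <> 0 ->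
  (forall u, inI a b u -> 2 * delta s e u * Derive f u - Derive (delta s e) u * f u = 0) ->
  exists c2, c2 <> 0 /\ forall u, inI a b u -> f u = c2 * Sf s e u.
Proof.
  intros [Hs [Hd Hfg]] Hu0 Hf0 HA.
  assert (K := const_I a b (fun t => f t / Sf s e t)).
  assert (K1 : forall t, inI a b t -> is_derive (fun t => f t / Sf s e t) t 0).
  { intros t Ht. pose proof (k_deriv s e f t (Hd t Ht) ltac:(apply (local_facts a b s e t Hs Ht)) ltac:(apply Hfg; auto)) as D.
    rewrite (HA t Ht) in D. unfold Rdiv in D. rewrite Rmult_0_l in D. exact D. }
  specialize (K K1). simpl in K.
  exists (f u0 / Sf s e u0). destruct (S_facts s e u0 (Hd u0 Hu0)) as [P0 _].
  split. { unfold Rdiv. apply Rmult_integral_contrapositive; split; auto. apply Rinv_neq_0_compat; lra. }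
  intros u Hu. destruct (S_facts s e u (Hd u Hu)) as [P _].
  rewrite <- (K u u0 Hu Hu0). field. lra.
Qed.

Lemma loc_const_deriv a b (h : R -> R) c u df : inI a b u ->
  (forall t, inI a b t -> h t = c) -> is_derive h u df -> df = 0.
Proof.
  intros Hu Hc D.
  assert (D2 : is_derive h u 0).
  { apply (is_derive_ext_loc (fun _ => c)).
    generalize (loc_inI a b u Hu). apply filter_imp. intros t Ht. symmetry; auto.
    exact (@is_derive_const R_AbsRing R_NormedModule c u). }
  apply is_derive_unique in D. apply is_derive_unique in D2. congruence.
Qed.

Lemma B_zero_conv a b s e f g c1 u : Hyps a b s e f g -> inI a b u ->
  (forall t, inI a b t -> g t = c1 / Sf s e t) -> Bcoef s e g u = 0.
Proof.
  intros [Hs [Hd Hfg]] Hu Hg.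
  pose proof (h_deriv s e g u (Hd u Hu) ltac:(apply (local_facts a b s e u Hs Hu)) ltac:(apply Hfg; auto)) as D.
  apply (loc_const_deriv a b _ c1) in D; auto.
  destruct (S_facts s e u (Hd u Hu)) as [P _].
  specialize (Hd u Hu).
  replace (Bcoef s e g u) with (Sf s e u * Bcoef s e g u / (2 * delta s e u) * (2 * delta s e u / Sf s e u)) by (field; lra).
  rewrite D. ring.
  intros t Ht. rewrite Hg; auto. destruct (S_facts s e t (Hd t Ht)) as [P' _]. field. lra.
Qed.


Lemma div0 N D : D <> 0 -> N / D = 0 -> N = 0.
Proof. intros HD E. replace N with (N / D * D) by (field; auto). rewrite E; ring. Qed.

Lemma coef_tang a b s e f g : Hyps a b s e f g -> T_tangential_ucurves s e f g a b ->
  forall u, inI a b u -> g u <> 0 ->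
  Acoef s e f g u = 0 /\ Bcoef s e g u = 0 /\ Ccoef e g u = 0.
Proof.
  intros [Hs [Hd Hfg]] Ht u Hu Hg.
  apply (poly3 _ _ _ (f u) (g u) Hg). intros v Hv.
  destruct (Hfg u Hu).
  apply (tang_point a b s e f g u v Hs Hu (Hd u Hu)); auto.
  apply Ht. split; auto.
Qed.

Lemma coef_orth a b s e f g : Hyps a b s e f g -> T_orthogonal_ucurves s e f g a b ->
  forall u, inI a b u -> g u <> 0 ->
  2 * g u * delta s e u ^ 2 * (1 + lambda s e u ^ 2) + lambda s e u * Acoef s e f g u = 0 /\
  lambda s e u * Bcoef s e g u = 0 /\ 2 * g u + lambda s e u * Ccoef e g u = 0.
Proof.
  intros [Hs [Hd Hfg]] Ho u Hu Hg.
  apply (poly3 _ _ _ (f u) (g u) Hg). intros v Hv.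
  destruct (Hfg u Hu).
  assert (E := Ho u v (conj Hu Hv)).
  rewrite (orth_point a b s e f g u v Hs Hu (Hd u Hu)) in E; auto.
  specialize (Hd u Hu).
  apply div0 in E; [|apply Rmult_integral_contrapositive; split; lra].
  lra.
Qed.

Lemma fwd_a a b s e f g u1 : Hyps a b s e f g -> inI a b u1 -> g u1 <> 0 ->
  T_tangential_ucurves s e f g a b ->
     (forall u, inI a b u -> kappa e u = 0) /\
     exists (c1 c2 : R) (L : R -> R), c1 <> 0 /\
       (forall u, inI a b u -> is_derive L u (cot_angle s e u)) /\
       (forall u, inI a b u ->
          g u = c1 / sqrt (Rabs (delta s e u)) /\
          f u = sqrt (Rabs (delta s e u)) * (c1 * L u + c2)).
Proof.
  intros HH Hu1 Hg1 Ht.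
  pose proof (coef_tang a b s e f g HH Ht) as C.
  destruct (g_const a b s e f g u1 HH Hu1 Hg1) as [c1 [Hc1 Hg]].
  { intros u Hu Hgu. apply C; auto. }
  destruct HH as [Hs [Hd Hfg]].
  assert (Gnz : forall u, inI a b u -> g u <> 0).
  { intros u Hu. rewrite Hg; auto. destruct (S_facts s e u (Hd u Hu)) as [P _].
    unfold Rdiv. apply Rmult_integral_contrapositive; split; auto. apply Rinv_neq_0_compat; lra. }
  assert (Hk : forall u, inI a b u -> kappa e u = 0).
  { intros u Hu. destruct (C u Hu (Gnz u Hu)) as [_ [_ C0]]. unfold Ccoef in C0.
    specialize (Gnz u Hu). nra. }
  split; auto.
  exists c1, 0, (fun t => / c1 * (f t / Sf s e t)).
  split; auto. split.
  - intros u Hu. destruct (Hfg u Hu) as [Hf _].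
    pose proof (is_derive_scal _ u (/ c1) _ (k_deriv s e f u (Hd u Hu) ltac:(apply (local_facts a b s e u Hs Hu)) Hf)) as D.
    destruct (C u Hu (Gnz u Hu)) as [A0 _]. unfold Acoef in A0. rewrite (Hk u Hu) in A0.
    destruct (point_facts a b s e u Hs Hu (Hd u Hu)) as [_ [_ [_ [_ VN]]]].
    destruct (S_facts s e u (Hd u Hu)) as [P [Q _]].
    replace (cot_angle s e u) with
      (/ c1 * ((2 * delta s e u * Derive f u - Derive (delta s e) u * f u) / (2 * delta s e u * Sf s e u))).
    exact D.
    unfold cot_angle. rewrite VN, <- Q. unfold lambda in A0.
    replace (2 * delta s e u * Derive f u - Derive (delta s e) u * f u) with
      (- (2 * g u * delta s e u ^ 2 * (0 - dot (vD s u) (e u) / delta s e u))) by lra.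
    rewrite (Hg u Hu). fold (Sf s e u). field. split; [|split]; auto; lra.
  - intros u Hu. destruct (S_facts s e u (Hd u Hu)) as [P _].
    split. apply Hg; auto. fold (Sf s e u). field. split; auto; lra.
Qed.

Lemma conv_a a b s e f g : Hyps a b s e f g ->
     ((forall u, inI a b u -> kappa e u = 0) /\
     exists (c1 c2 : R) (L : R -> R), c1 <> 0 /\
       (forall u, inI a b u -> is_derive L u (cot_angle s e u)) /\
       (forall u, inI a b u ->
          g u = c1 / sqrt (Rabs (delta s e u)) /\
          f u = sqrt (Rabs (delta s e u)) * (c1 * L u + c2))) ->
  T_tangential_ucurves s e f g a b.
Proof.
  intros HH [Hk [c1 [c2 [L [Hc1 [HL Hfg']]]]]].
  intros u v [Hu Hv].
  assert (HB : Bcoef s e g u = 0).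
  { apply (B_zero_conv a b s e f g c1 u HH Hu). intros t Ht. apply Hfg'; auto. }
  destruct HH as [Hs [Hd Hfg]]. destruct (Hfg u Hu) as [Hf Hg].
  apply (tang_point a b s e f g u v Hs Hu (Hd u Hu) Hf Hg).
  assert (HC : Ccoef e g u = 0). { unfold Ccoef. rewrite (Hk u Hu). ring. }
  pose proof (k_deriv s e f u (Hd u Hu) ltac:(apply (local_facts a b s e u Hs Hu)) Hf) as D.
  assert (D2 : is_derive (fun t => f t / Sf s e t) u (c1 * cot_angle s e u)).
  { apply (is_derive_ext_loc (fun t => c1 * L t + c2)).
    generalize (loc_inI a b u Hu). apply filter_imp. intros t Ht.
    destruct (Hfg' t Ht) as [_ E]. destruct (S_facts s e t (Hd t Ht)) as [P _].
    enough (HH : c1 * L t + c2 = f t / Sf s e t :> R) by exact HH. rewrite E. fold (Sf s e t). field. lra.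
    auto_derive. exists (cot_angle s e u). apply HL; auto. etared.
    rewrite (is_derive_unique _ _ _ (HL u Hu)). ring. }
  apply is_derive_unique in D. apply is_derive_unique in D2. rewrite D in D2.
  destruct (point_facts a b s e u Hs Hu (Hd u Hu)) as [_ [_ [_ [_ VN]]]].
  destruct (S_facts s e u (Hd u Hu)) as [P [Q _]].
  unfold cot_angle in D2. rewrite VN, <- Q in D2.
  assert (HA : Acoef s e f g u = 0).
  { unfold Acoef. rewrite (Hk u Hu).
    replace (2 * delta s e u * Derive f u - Derive (delta s e) u * f u) with
      (c1 * (dot (vD s u) (e u) / Sf s e u ^ 2) * (2 * delta s e u * Sf s e u)).
    destruct (Hfg' u Hu) as [E _]. rewrite E. unfold lambda. fold (Sf s e u). field.
    split; auto; lra.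
    rewrite <- D2. field. split; auto; lra. }
  rewrite HA, HB, HC. ring.
Qed.

Lemma fwd_b a b s e f g u0 u1 : Hyps a b s e f g -> inI a b u0 -> f u0 <> 0 ->
  inI a b u1 -> g u1 <> 0 ->
  T_orthogonal_ucurves s e f g a b ->
     (forall u, inI a b u -> kappa e u * lambda s e u + 1 = 0) /\
     exists c1 c2 : R, c1 <> 0 /\ c2 <> 0 /\
       (forall u, inI a b u ->
          g u = c1 / sqrt (Rabs (delta s e u)) /\
          f u = c2 * sqrt (Rabs (delta s e u))).
Proof.
  intros HH Hu0 Hf0 Hu1 Hg1 Ho.
  pose proof (coef_orth a b s e f g HH Ho) as C.
  assert (KL : forall u, inI a b u -> g u <> 0 -> kappa e u * lambda s e u + 1 = 0).
  { intros u Hu Hgu. destruct (C u Hu Hgu) as [_ [_ C2]]. unfold Ccoef in C2.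
    apply (Rmult_eq_reg_l (2 * g u)). lra. lra. }
  destruct (g_const a b s e f g u1 HH Hu1 Hg1) as [c1 [Hc1 Hg]].
  { intros u Hu Hgu. destruct (C u Hu Hgu) as [_ [C1 _]].
    specialize (KL u Hu Hgu).
    destruct (Req_dec (lambda s e u) 0) as [E|E]. rewrite E in KL; lra.
    apply (Rmult_eq_reg_l (lambda s e u)); auto. lra. }
  assert (Gnz : forall u, inI a b u -> g u <> 0).
  { destruct HH as [Hs [Hd Hfg]].
    intros u Hu. rewrite Hg; auto. destruct (S_facts s e u (Hd u Hu)) as [P _].
    unfold Rdiv. apply Rmult_integral_contrapositive; split; auto. apply Rinv_neq_0_compat; lra. }
  destruct (f_const a b s e f g u0 HH Hu0 Hf0) as [c2 [Hc2 Hf]].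
  { intros u Hu. destruct (C u Hu (Gnz u Hu)) as [C0 _].
    specialize (KL u Hu (Gnz u Hu)). unfold Acoef in C0.
    destruct (Req_dec (lambda s e u) 0) as [E|E]. rewrite E in KL; lra.
    apply (Rmult_eq_reg_l (lambda s e u)); auto.
    replace (lambda s e u * (2 * delta s e u * Derive f u - Derive (delta s e) u * f u)) with
      (2 * g u * delta s e u ^ 2 * (1 + lambda s e u ^ 2) +
       lambda s e u * (2 * delta s e u * Derive f u - Derive (delta s e) u * f u +
         2 * g u * delta s e u ^ 2 * (kappa e u - lambda s e u))
       - 2 * g u * delta s e u ^ 2 * (kappa e u * lambda s e u + 1)) by ring.
    rewrite C0, KL. ring. }
  split. { intros u Hu. apply KL; auto. }
  exists c1, c2. split; [auto|split; [auto|]].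
  intros u Hu. split. apply Hg; auto. apply Hf; auto.
Qed.

Lemma conv_b a b s e f g : Hyps a b s e f g ->
     ((forall u, inI a b u -> kappa e u * lambda s e u + 1 = 0) /\
     exists c1 c2 : R, c1 <> 0 /\ c2 <> 0 /\
       (forall u, inI a b u ->
          g u = c1 / sqrt (Rabs (delta s e u)) /\
          f u = c2 * sqrt (Rabs (delta s e u)))) ->
  T_orthogonal_ucurves s e f g a b.
Proof.
  intros HH [Hk [c1 [c2 [Hc1 [Hc2 Hfg']]]]].
  intros u v [Hu Hv].
  assert (HB : Bcoef s e g u = 0).
  { apply (B_zero_conv a b s e f g c1 u HH Hu). intros t Ht. apply Hfg'; auto. }
  destruct HH as [Hs [Hd Hfg]]. destruct (Hfg u Hu) as [Hf Hg].
  rewrite (orth_point a b s e f g u v Hs Hu (Hd u Hu) Hf Hg).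
  pose proof (k_deriv s e f u (Hd u Hu) ltac:(apply (local_facts a b s e u Hs Hu)) Hf) as D.
  apply (loc_const_deriv a b _ c2) in D; auto.
  2: { intros t Ht. destruct (Hfg' t Ht) as [_ E]. destruct (S_facts s e t (Hd t Ht)) as [P _].
       rewrite E. fold (Sf s e t). field. lra. }
  destruct (S_facts s e u (Hd u Hu)) as [P _]. specialize (Hd u Hu).
  apply div0 in D; [|apply Rmult_integral_contrapositive; split; [apply Rmult_integral_contrapositive; split|]; lra].
  unfold Acoef, Ccoef. rewrite HB.
  replace (2 * g u * (delta s e u ^ 2 * (1 + lambda s e u ^ 2) + v ^ 2) +
   lambda s e u *
   (2 * delta s e u * Derive f u - Derive (delta s e) u * f u +
    2 * g u * delta s e u ^ 2 * (kappa e u - lambda s e u) + 0 * v +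
    2 * g u * kappa e u * v ^ 2))
  with (lambda s e u * (2 * delta s e u * Derive f u - Derive (delta s e) u * f u)
        + 2 * g u * (delta s e u ^ 2 + v ^ 2) * (kappa e u * lambda s e u + 1)) by ring.
  rewrite D, (Hk u Hu). unfold Rdiv. ring.
Qed.

Theorem proposition5 (a b : Rbar) (s e : R -> V3) (f g : R -> R) :
  Rbar_lt a b ->
  standard_ruled a b s e ->
  (forall u, inI a b u -> delta s e u <> 0) ->
  (forall u, inI a b u -> ex_derive f u /\ ex_derive g u) ->
  (exists u, inI a b u /\ f u <> 0) ->
  (exists u, inI a b u /\ g u <> 0) ->
  (T_tangential_ucurves s e f g a b <->
     (forall u, inI a b u -> kappa e u = 0) /\
     exists (c1 c2 : R) (L : R -> R), c1 <> 0 /\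
       (forall u, inI a b u -> is_derive L u (cot_angle s e u)) /\
       (forall u, inI a b u ->
          g u = c1 / sqrt (Rabs (delta s e u)) /\
          f u = sqrt (Rabs (delta s e u)) * (c1 * L u + c2)))
  /\
  (T_orthogonal_ucurves s e f g a b <->
     (forall u, inI a b u -> kappa e u * lambda s e u + 1 = 0) /\
     exists c1 c2 : R, c1 <> 0 /\ c2 <> 0 /\
       (forall u, inI a b u ->
          g u = c1 / sqrt (Rabs (delta s e u)) /\
          f u = c2 * sqrt (Rabs (delta s e u)))).
Proof.
  intros _ Hs Hd Hfg [u0 [Hu0 Hf0]] [u1 [Hu1 Hg1]].
  assert (HH : Hyps a b s e f g) by (split; [|split]; auto).
  split; split.
  - apply (fwd_a a b s e f g u1 HH Hu1 Hg1).
  - apply (conv_a a b s e f g HH).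
  - apply (fwd_b a b s e f g u0 u1 HH Hu0 Hf0 Hu1 Hg1).
  - apply (conv_b a b s e f g HH).
Qed.
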